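(* Consider the single-element, single-slab space-time SBP scheme with weakly imposed homogeneous Dirichlet boundary conditions: unknowns $\boldsymbol\rho,\boldsymbol g_1,\dots,\boldsymbol g_{n_v}$ satisfying $$\mathsf D_t\boldsymbol\rho+\mathsf D_x\langle v\boldsymbol g\rangle=-\sigma_a\boldsymbol\rho+\mathsf{SAT}^{\rho}_L+\mathsf{SAT}^{\rho}_R-\mathsf H_t^{-1}\mathsf t_B\mathsf t_B^\top(\boldsymbol\rho-\boldsymbol\rho(0)),$$ $$\mathsf D_t\boldsymbol g_k+\tfrac{v_k}{\varepsilon}\mathsf D_x\boldsymbol g_k-\tfrac1\varepsilon\langle v\mathsf D_x\boldsymbol g\rangle+\tfrac{v_k}{\varepsilon^2}\mathsf D_x\boldsymbol\rho=-\Big(\tfrac{\sigma_s}{\varepsilon^2}+\sigma_a\Big)\boldsymbol g_k+\mathsf{SAT}^{g_k}_{LR}-\langle\mathsf{SAT}^{g}_{LR}\rangle-\mathsf H_t^{-1}\mathsf t_B\mathsf t_B^\top(\boldsymbol g_k-\boldsymbol g_k(0)),$$ $k=1,\dots,n_v$, where $\mathsf{SAT}^\rho_L=-\tau_\rho\mathsf H_x^{-1}\mathsf t_L\mathsf t_L^\top\langle v^+(\boldsymbol\rho+\varepsilon\boldsymbol g)\rangle$, $\mathsf{SAT}^\rho_R=\tau_\rho\mathsf H_x^{-1}\mathsf t_R\mathsf t_R^\top\langle v^-(\boldsymbol\rho+\varepsilon\boldsymbol g)\rangle$, and $\mathsf{SAT}^{g_k}_{LR}=-\tau_g v_k\mathsf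 H_x^{-1}\mathsf t_L\mathsf t_L^\top(\boldsymbol\rho+\varepsilon\boldsymbol g_k)$ if $v_k>0$, $\mathsf{SAT}^{g_k}_{LR}=\tau_g v_k\mathsf H_x^{-1}\mathsf t_R\mathsf t_R^\top(\boldsymbol\rho+\varepsilon\boldsymbol g_k)$ if $v_k<0$ (and $0$ if $v_k=0$), with initial data satisfying $\langle\boldsymbol g(0)\rangle=0$. If $\tau_\rho=\frac1{2\varepsilon}$, $\tau_g=\frac1{2\varepsilon^2}$ and the velocity quadrature is symmetric, then the scheme is stable: every solution satisfies $$\tfrac12\boldsymbol\rho^\top(\bar{\boldsymbol t}_T\bar{\boldsymbol t}_T^\top\otimes\bar{\mathsf H}_x)\boldsymbol\rho+\tfrac{\varepsilon^2}2\langle\boldsymbol g^\top(\bar{\boldsymbol t}_T\bar{\boldsymbol t}_T^\top\otimes\bar{\mathsf H}_x)\boldsymbol g\rangle\le\tfrac12\boldsymbol\rho(0)^\top(\bar{\boldsymbol t}_B\bar{\boldsymbol t}_B^\top\otimes\bar{\mathsf H}_x)\boldsymbol\rho(0)+\tfrac{\varepsilon^2}2\langle\boldsymbol g(0)^\top(\bar{\boldsymbol t}_B\bar{\boldsymbol t}_B^\top\otimes\bar{\mathsf H}_x)\boldsymbol g(0)\rangle.$$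
   Context: SBP operators: $\bar{\mathsf D}=\bar{\mathsf H}^{-1}\bar{\mathsf Q}$ on nodes $x_0<\dots<x_n$ is a degree-$p$ SBP approximation of $d/dx$ if $\bar{\mathsf D}\boldsymbol x^k=k\boldsymbol x^{k-1}$ for $0\le k\le p$, $\bar{\mathsf H}$ is diagonal symmetric positive definite, and $\bar{\mathsf Q}+\bar{\mathsf Q}^\top=\bar{\boldsymbol t}_R\bar{\boldsymbol t}_R^\top-\bar{\boldsymbol t}_L\bar{\boldsymbol t}_L^\top=\mathrm{diag}(-1,0,\dots,0,1)$, with $\bar{\boldsymbol t}_L,\bar{\boldsymbol t}_R$ the first/last unit vectors. $\bar{\mathsf D}_x=\bar{\mathsf H}_x^{-1}\bar{\mathsf Q}_x$ on $n_x+1$ spatial nodes; $\bar{\mathsf D}_t=\bar{\mathsf H}_t^{-1}\bar{\mathsf Q}_t$ on $n_t+1$ temporal nodes with first/last unit vectors $\bar{\boldsymbol t}_B,\bar{\boldsymbol t}_T$. With identities $\mathsf I_{n_x},\mathsf I_{n_t}$ of sizes $n_x+1,n_t+1$: $\mathsf D_t=\bar{\mathsf D}_t\otimes\mathsf I_{n_x}$, $\mathsf D_x=\mathsf I_{n_t}\otimes\bar{\mathsf D}_x$, $\mathsf H_t=\bar{\mathsf H}_t\otimes\mathsf I_{n_x}$, $\mathsf H_x=\mathsf I_{n_t}\otimes\bar{\mathsf H}_x$, $\mathsf t_{R/L}=\mathsf I_{n_t}\otimes\bar{\boldsymbol t}_{R/L}$, $\mathsf t_B=\bar{\boldsymbol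 t}_B\otimes\mathsf I_{n_x}$. Velocity nodes $v_k$, weights $\omega_k>0$, $k=1,\dots,n_v$, with $\sum\omega_k=1$, $\sum\omega_kv_k=0$; $v^+=\max(v,0)$, $v^-=\min(v,0)$; $\langle\boldsymbol a\rangle=\sum_k\omega_k\boldsymbol a_k$, e.g. $\langle v^+(\boldsymbol\rho+\varepsilon\boldsymbol g)\rangle=\sum_k\omega_kv_k^+(\boldsymbol\rho+\varepsilon\boldsymbol g_k)$. The quadrature is symmetric if $\omega_k=\omega_{k'}$ and $v_k=-v_{k'}$ whenever $k+k'=n_v+1$. Parameters $\varepsilon>0$, $\sigma_s>0$, $\sigma_a\ge0$; $\boldsymbol\rho(0),\boldsymbol g_k(0)$ given initial-data vectors. *)

(* Defs.v *)
From HB Require Import structures.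
From mathcomp Require Import all_boot all_order all_algebra.
From mathcomp Require Export mxtens.
Set Implicit Arguments. Unset Strict Implicit. Unset Printing Implicit Defensive.
Import Order.TTheory GRing.Theory Num.Theory.
Local Open Scope ring_scope.

Section Defs.
Variable R : realFieldType.

Definition tfirst (n : nat) : 'cV[R]_n.+1 := delta_mx 0 0.
Definition tlast (n : nat) : 'cV[R]_n.+1 := delta_mx ord_max 0.

Definition nodepow (n : nat) (x : 'I_n.+1 -> R) (k : nat) : 'cV[R]_n.+1 :=
  \col_i (x i ^+ k).
Definition dnodepow (n : nat) (x : 'I_n.+1 -> R) (k : nat) : 'cV[R]_n.+1 :=
  \col_i (k%:R * x i ^+ k.-1).

(* D = H^{-1} Q is a degree-p SBP approximation of d/dx on the strictly
   increasing nodes x_0 < ... < x_n *)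
Definition SBP (n p : nat) (x : 'I_n.+1 -> R) (H Q : 'M[R]_n.+1) : Prop :=
  [/\ (forall i j : 'I_n.+1, (i < j)%N -> x i < x j),
      (forall k, (k <= p)%N -> (invmx H *m Q) *m nodepow x k = dnodepow x k),
      is_diag_mx H,
      (forall i, 0 < H i i) &
      Q + Q^T = tlast n *m (tlast n)^T - tfirst n *m (tfirst n)^T].

Definition quadrature (nv : nat) (v w : 'I_nv -> R) : Prop :=
  [/\ (forall k, 0 < w k), \sum_k w k = 1 & \sum_k w k * v k = 0].

(* symmetric quadrature: with 1-based indices, k + k' = nv + 1 means k' is the
   reversed index of k *)
Definition symmetric_quadrature (nv : nat) (v w : 'I_nv -> R) : Prop :=
  forall k, w (rev_ord k) = w k /\ v (rev_ord k) = - v k.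

Definition avg (nv N : nat) (w : 'I_nv -> R) (a : 'I_nv -> 'cV[R]_N) : 'cV[R]_N :=
  \sum_k w k *: a k.
Definition avgR (nv : nat) (w : 'I_nv -> R) (a : 'I_nv -> R) : R :=
  \sum_k w k * a k.

Definition vplus (a : R) : R := Num.max a 0.
Definition vminus (a : R) : R := Num.min a 0.

Definition qform (N : nat) (A : 'M[R]_N) (u : 'cV[R]_N) : R := (u^T *m A *m u) 0 0.

End Defs.
Arguments tfirst {R} n.
Arguments tlast {R} n.

(* Main.v *)
Require Import Defs.
From HB Require Import structures.
From mathcomp Require Import all_boot all_order all_algebra.
From mathcomp Require Import mxtens.
From mathcomp Require Import ring lra.
Import Order.TTheory GRing.Theory Num.Theory.
Local Open Scope ring_scope.

Module Helpers.
Set Implicit Arguments. Unset Strict Implicit. Unset Printing Implicit Defensive.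

Section BF.
Variable R : realFieldType.
Variable N : nat.
Implicit Types (A B : 'M[R]_N) (u z : 'cV[R]_N).

Definition bf A u z : R := (u^T *m A *m z) 0 0.

Lemma bfDr A u z1 z2 : bf A u (z1 + z2) = bf A u z1 + bf A u z2.
Proof. by rewrite /bf mulmxDr mxE. Qed.
Lemma bfNr A u z : bf A u (- z) = - bf A u z.
Proof. by rewrite /bf mulmxN mxE. Qed.
Lemma bfBr A u z1 z2 : bf A u (z1 - z2) = bf A u z1 - bf A u z2.
Proof. by rewrite bfDr bfNr. Qed.
Lemma bfZr A u a z : bf A u (a *: z) = a * bf A u z.
Proof. by rewrite /bf -scalemxAr mxE. Qed.
Lemma bf0r A u : bf A u 0 = 0.
Proof. by rewrite /bf mulmx0 mxE. Qed.
Lemma bfDl A u1 u2 z : bf A (u1 + u2) z = bf A u1 z + bf A u2 z.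
Proof. by rewrite /bf linearD /= !mulmxDl mxE. Qed.
Lemma bfZl A a u z : bf A (a *: u) z = a * bf A u z.
Proof. by rewrite /bf linearZ /= -!scalemxAl mxE. Qed.
Lemma bf0l A z : bf A 0 z = 0.
Proof. by rewrite /bf trmx0 !mul0mx mxE. Qed.
Lemma bfDm A B u z : bf (A + B) u z = bf A u z + bf B u z.
Proof. by rewrite /bf mulmxDr mulmxDl mxE. Qed.
Lemma bfBm A B u z : bf (A - B) u z = bf A u z - bf B u z.
Proof. by rewrite /bf mulmxBr mulmxBl !mxE. Qed.
Lemma bf_mulr A B u z : bf A u (B *m z) = bf (A *m B) u z.
Proof. by rewrite /bf !mulmxA. Qed.
Lemma bf_tr A u z : bf A^T u z = bf A z u.
Proof.
rewrite /bf; have -> : (z^T *m A *m u) 0 0 = ((z^T *m A *m u)^T) 0 0 by rewrite [in RHS]mxE.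
by rewrite !trmx_mul trmxK mulmxA.
Qed.
Lemma bf_sumr I (r : seq I) (P : pred I) (w : I -> R) (f : I -> 'cV[R]_N) A u :
  bf A u (\sum_(k <- r | P k) w k *: f k) = \sum_(k <- r | P k) w k * bf A u (f k).
Proof.
apply: (big_rec2 (fun a b => bf A u a = b)); first by rewrite bf0r.
by move=> k a b _ H; rewrite bfDr bfZr H.
Qed.
Lemma bf_suml I (r : seq I) (P : pred I) (w : I -> R) (f : I -> 'cV[R]_N) A z :
  bf A (\sum_(k <- r | P k) w k *: f k) z = \sum_(k <- r | P k) w k * bf A (f k) z.
Proof.
apply: (big_rec2 (fun a b => bf A a z = b)); first by rewrite bf0l.
by move=> k a b _ H; rewrite bfDl bfZl H.
Qed.
Lemma bf_sym A u : bf A u u = (bf (A + A^T) u u) / 2.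
Proof. by rewrite bfDm bf_tr; field. Qed.
Lemma bf_diag A u z : is_diag_mx A -> bf A u z = \sum_i u i 0 * A i i * z i 0.
Proof.
move=> /is_diag_mxP dA; rewrite /bf mxE; apply: eq_bigr => j _.
rewrite mxE (bigD1 j) //= big1 ?addr0 ?mxE //.
by move=> i /negbTE nij; rewrite dA ?mulr0 // val_eqE nij.
Qed.
Lemma bf_psd A u : is_diag_mx A -> (forall i, 0 <= A i i) -> 0 <= bf A u u.
Proof.
move=> dA pA; rewrite bf_diag //; apply: sumr_ge0 => i _.
by rewrite mulrAC -expr2 mulr_ge0 ?sqr_ge0.
Qed.
Lemma bf_symm A u z : A^T = A -> bf A u z = bf A z u.
Proof. by move=> sA; rewrite -bf_tr sA. Qed.
End BF.

Section BF2.
Variable R : realFieldType.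
Variable N : nat.
Implicit Types (A B : 'M[R]_N) (u z : 'cV[R]_N).
Lemma bfNl A u z : bf A (- u) z = - bf A u z.
Proof. by rewrite -scaleN1r bfZl mulN1r. Qed.
Lemma bfBl A u1 u2 z : bf A (u1 - u2) z = bf A u1 z - bf A u2 z.
Proof. by rewrite bfDl bfNl. Qed.
Lemma bf_pd_eq0 A u : is_diag_mx A -> (forall i, 0 < A i i) -> bf A u u = 0 -> u = 0.
Proof.
move=> dA pA; rewrite bf_diag // => /eqP; rewrite psumr_eq0 => [/allP H0|i _]; last first.
  by rewrite mulrAC -expr2 mulr_ge0 ?sqr_ge0 ?ltW.
apply/matrixP => i j; rewrite (ord1 j) mxE.
have /H0 : i \in index_enum 'I_N by rewrite mem_index_enum.
rewrite /= mulrAC -expr2 mulf_eq0 sqrf_eq0 (gt_eqF (pA i)) orbF.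
by move/eqP.
Qed.
End BF2.

Lemma G_lemma (R : realFieldType) nv (w v : 'I_nv -> R) (eps c q r t A0 hG qBG : R)
  (a p h s b b0 : 'I_nv -> R) :
 (forall k, a k + v k / eps * p k - eps^-1 * q + v k / eps^+2 * r
            = -(c * h k) + s k - t - (b k - b0 k)) ->
 \sum_k w k = 1 -> \sum_k w k * v k = 0 -> \sum_k w k * a k = A0 ->
 q = \sum_k w k * (v k * p k) -> \sum_k w k * h k = hG -> \sum_k w k * s k = t ->
 \sum_k w k * b k = qBG -> \sum_k w k * b0 k = 0 ->
 A0 = -(c * hG) - qBG.
Proof.
move=> E w1 wv0 sa sq sh ss sb sb0.
have S : \sum_k w k * (a k + v k / eps * p k - eps^-1 * q + v k / eps^+2 * r)
       = \sum_k w k * (-(c * h k) + s k - t - (b k - b0 k)).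
  by apply: eq_bigr => k _; rewrite E.
have L1 : \sum_k w k * (a k + v k / eps * p k - eps^-1 * q + v k / eps^+2 * r)
   = \sum_k w k * a k + eps^-1 * \sum_k w k * (v k * p k) + (- (eps^-1 * q)) * \sum_k w k
     + (r / eps^+2) * \sum_k w k * v k.
  by rewrite !mulr_sumr -!big_split /=; apply: eq_bigr => k _; ring.
have R1 : \sum_k w k * (-(c * h k) + s k - t - (b k - b0 k))
   = (- c) * \sum_k w k * h k + \sum_k w k * s k + (- t) * \sum_k w k
     + (-1) * \sum_k w k * b k + \sum_k w k * b0 k.
  by rewrite !mulr_sumr -!big_split /=; apply: eq_bigr => k _; ring.
move: S; rewrite L1 R1 w1 wv0 sa -sq sh ss sb sb0; lra.
Qed.

Section BF3.
Variable R : realFieldType.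
Variable N : nat.
Lemma bf_avgr nv (A : 'M[R]_N) u (w : 'I_nv -> R) f :
  bf A u (avg w f) = \sum_k w k * bf A u (f k).
Proof. exact: bf_sumr. Qed.
Lemma bf_avgl nv (A : 'M[R]_N) z (w : 'I_nv -> R) f :
  bf A (avg w f) z = \sum_k w k * bf A (f k) z.
Proof. exact: bf_suml. Qed.
Lemma bf_avg_sat nv (A : 'M[R]_N) u (w a : 'I_nv -> R) x e y :
  bf A u (avg w (fun k => a k *: (x + e *: y k)))
  = \sum_k w k * (a k * (bf A u x + e * bf A u (y k))).
Proof. by rewrite bf_avgr; apply: eq_bigr => k _; rewrite bfZr bfDr bfZr. Qed.
End BF3.

Section T.
Variable R : realFieldType.

Lemma mxtens_index_eq m n (i i' : 'I_m) (j j' : 'I_n) :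
  (mxtens_index (i, j) == mxtens_index (i', j')) = (i == i') && (j == j').
Proof.
apply/eqP/andP => [/(congr1 (@mxtens_unindex m n))|[/eqP -> /eqP ->]] //.
by rewrite !mxtens_indexK => -[-> ->].
Qed.

Lemma tens11 m n : (1%:M : 'M[R]_m) *t (1%:M : 'M[R]_n) = 1%:M.
Proof.
apply/matrixP => k l.
case: (mxtens_indexP k) => i j; case: (mxtens_indexP l) => i' j'.
rewrite tensmxE !mxE mxtens_index_eq.
by case: (i == i'); case: (j == j'); rewrite /= ?mulr1 ?mulr0.
Qed.

Lemma tensDl m n p q (A B : 'M[R]_(m,n)) (C : 'M[R]_(p,q)) :
  (A + B) *t C = A *t C + B *t C.
Proof. by apply/matrixP => k l; rewrite !mxE mulrDl. Qed.
Lemma tensBl m n p q (A B : 'M[R]_(m,n)) (C : 'M[R]_(p,q)) :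
  (A - B) *t C = A *t C - B *t C.
Proof. by apply/matrixP => k l; rewrite !mxE mulrBl. Qed.
Lemma tensDr m n p q (A : 'M[R]_(m,n)) (B C : 'M[R]_(p,q)) :
  A *t (B + C) = A *t B + A *t C.
Proof. by apply/matrixP => k l; rewrite !mxE mulrDr. Qed.
Lemma tensBr m n p q (A : 'M[R]_(m,n)) (B C : 'M[R]_(p,q)) :
  A *t (B - C) = A *t B - A *t C.
Proof. by apply/matrixP => k l; rewrite !mxE mulrBr. Qed.

Lemma tens_diag m n (A : 'M[R]_m) (B : 'M[R]_n) :
  is_diag_mx A -> is_diag_mx B -> is_diag_mx (A *t B).
Proof.
move=> /is_diag_mxP dA /is_diag_mxP dB; apply/is_diag_mxP => k l.
case: (mxtens_indexP k) => i j; case: (mxtens_indexP l) => i' j' nkl.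
rewrite tensmxE.
case: (eqVneq i i') => [ei|ni]; last by rewrite dA ?mul0r.
case: (eqVneq j j') => [ej|nj]; last by rewrite dB ?mulr0.
by move: nkl; rewrite ei ej eqxx.
Qed.

Lemma tens_diag_ge0 m n (A : 'M[R]_m) (B : 'M[R]_n) :
  (forall i, 0 <= A i i) -> (forall j, 0 <= B j j) -> forall k, 0 <= (A *t B) k k.
Proof.
move=> pA pB k; case: (mxtens_indexP k) => i j.
by rewrite tensmxE mulr_ge0.
Qed.

Lemma tens_diag_gt0 m n (A : 'M[R]_m) (B : 'M[R]_n) :
  (forall i, 0 < A i i) -> (forall j, 0 < B j j) -> forall k, 0 < (A *t B) k k.
Proof.
move=> pA pB k; case: (mxtens_indexP k) => i j.
by rewrite tensmxE mulr_gt0.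
Qed.

Lemma diag_unit n (A : 'M[R]_n) : is_diag_mx A -> (forall i, 0 < A i i) -> A \in unitmx.
Proof.
move=> /diag_mxP [d ->] pA; rewrite unitmxE det_diag unitfE prodf_seq_neq0.
apply/allP => i _; have := pA i; rewrite mxE eqxx mulr1n => h.
by rewrite /= gt_eqF.
Qed.

Lemma delta_outer n (i : 'I_n) :
  (delta_mx i 0 : 'cV[R]_n) *m (delta_mx i 0)^T = delta_mx i i.
Proof. by rewrite trmx_delta mul_delta_mx. Qed.

Lemma delta_diag n (i : 'I_n) : is_diag_mx (delta_mx i i : 'M[R]_n).
Proof.
apply/is_diag_mxP => a b nab; rewrite mxE.
case: (eqVneq a i) => [ea|]; last by rewrite andFb.
case: (eqVneq b i) => [eb|]; last by rewrite andbF.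
by move: nab; rewrite ea eb eqxx.
Qed.

Lemma delta_ge0 n (i : 'I_n) a : 0 <= (delta_mx i i : 'M[R]_n) a a.
Proof. by rewrite mxE ler0n. Qed.

Lemma diag_sym n (A : 'M[R]_n) : is_diag_mx A -> A^T = A.
Proof.
move=> /is_diag_mxP dA; apply/matrixP => i j; rewrite mxE.
case: (eqVneq i j) => [->//|nij].
by rewrite !dA // eq_sym.
Qed.
End T.

Lemma final_ineq (R : realFieldType) (nv : nat) (w v : 'I_nv -> R) (eps siga c : R)
 (qTr qBr qBr0 br hr XR XL C0 : R)
 (qTg qBg qBg0 b h ZR ZL YR YL m n cc s : 'I_nv -> R) :
 0 < eps -> 0 <= siga -> 0 <= c -> (forall k, 0 < w k) -> \sum_k w k * v k = 0 ->
 (forall k, s k = if 0 < v k then - (1/(2*eps^+2) * v k) * (YL k + eps * ZL k)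
               else if v k < 0 then (1/(2*eps^+2) * v k) * (YR k + eps * ZR k) else 0) ->
 qTr/2 - qBr/2 + C0 = - (siga * hr) - 1/(2*eps) * \sum_k w k * (vplus (v k) * (XL + eps * YL k))
     + 1/(2*eps) * \sum_k w k * (vminus (v k) * (XR + eps * YR k)) - (qBr - br) ->
 (forall k, qTg k / 2 - qBg k / 2 + v k / eps * ((ZR k - ZL k)/2) - eps^-1 * m k + v k / eps^+2 * cc k
     = - (c * h k) + s k - n k - (qBg k - b k)) ->
 \sum_k w k * m k = 0 -> \sum_k w k * n k = 0 ->
 C0 + \sum_k w k * (v k * cc k) = \sum_k w k * (v k * YR k) - \sum_k w k * (v k * YL k) ->
 0 <= qBr - 2 * br + qBr0 -> (forall k, 0 <= qBg k - 2 * b k + qBg0 k) ->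
 0 <= hr -> (forall k, 0 <= h k) ->
 (forall k, 0 <= XR + 2 * eps * YR k + eps^+2 * ZR k) ->
 (forall k, 0 <= XL + 2 * eps * YL k + eps^+2 * ZL k) ->
 1/2 * qTr + eps^+2/2 * \sum_k w k * qTg k <= 1/2 * qBr0 + eps^+2/2 * \sum_k w k * qBg0 k.
Proof.
move=> e0 sa0 c0 w0 wv0 hs Er Eg sm sn Ecc pr pg phr ph pR pL.
have en0 : eps != 0 by rewrite gt_eqF.
pose F k := eps^+2/2 * (qTg k - qBg0 k) - eps * m k + eps^+2 * n k + v k * cc k
   - v k * (YR k - YL k) - 1/(2*eps) * (vplus (v k) * (XL + eps * YL k))
   + 1/(2*eps) * (vminus (v k) * (XR + eps * YR k)) - (XR - XL) / (2 * eps) * v k.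
have Fle : forall k, F k <= 0.
  move=> k.
  have E2 : qTg k = 2 * (- (c * h k) + s k - n k - (qBg k - b k) + qBg k / 2
      - v k / eps * ((ZR k - ZL k)/2) + eps^-1 * m k - v k / eps^+2 * cc k).
    by have := Eg k; lra.
  have p1 : 0 <= eps^+2 * (qBg k - 2 * b k + qBg0 k) by rewrite mulr_ge0 ?sqr_ge0.
  have p2 : 0 <= eps^+2 * (c * h k) by rewrite mulr_ge0 ?sqr_ge0 ?mulr_ge0 ?ph.
  rewrite /F /=. rewrite E2. rewrite (hs k). rewrite /vplus /vminus.
  case: (ltgtP (v k) 0) => hv.
  - have p3 : 0 <= (- v k / (2 * eps)) * (XL + 2 * eps * YL k + eps^+2 * ZL k).
      by rewrite mulr_ge0 // divr_ge0 ?oppr_ge0 ?ltW // mulr_gt0.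
    set T := (X in X <= 0).
    have -> : T = - (eps^+2 * (qBg k - 2 * b k + qBg0 k)) / 2 - eps^+2 * (c * h k)
                  - (- v k / (2 * eps)) * (XL + 2 * eps * YL k + eps^+2 * ZL k).
      by rewrite /T; field.
    lra.
  - have p3 : 0 <= (v k / (2 * eps)) * (XR + 2 * eps * YR k + eps^+2 * ZR k).
      by rewrite mulr_ge0 // divr_ge0 ?ltW // mulr_gt0.
    set T := (X in X <= 0).
    have -> : T = - (eps^+2 * (qBg k - 2 * b k + qBg0 k)) / 2 - eps^+2 * (c * h k)
                  - (v k / (2 * eps)) * (XR + 2 * eps * YR k + eps^+2 * ZR k).
      by rewrite /T; field.
    lra.
  -
    rewrite hv; set T := (X in X <= 0).
    have -> : T = - (eps^+2 * (qBg k - 2 * b k + qBg0 k)) / 2 - eps^+2 * (c * h k).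
      by rewrite /T; field.
    lra.
have Fsum : \sum_k w k * F k <= 0.
  by apply: sumr_le0 => k _; apply: mulr_ge0_le0; [exact: ltW | exact: Fle].
have FE : \sum_k w k * F k =
   eps^+2/2 * \sum_k w k * qTg k + (- (eps^+2/2)) * \sum_k w k * qBg0 k
   + (- eps) * \sum_k w k * m k + eps^+2 * \sum_k w k * n k
   + \sum_k w k * (v k * cc k) + (-1) * \sum_k w k * (v k * YR k)
   + \sum_k w k * (v k * YL k)
   + (- (1/(2*eps))) * \sum_k w k * (vplus (v k) * (XL + eps * YL k))
   + 1/(2*eps) * \sum_k w k * (vminus (v k) * (XR + eps * YR k))
   + (- ((XR - XL) / (2 * eps))) * \sum_k w k * v k.
  rewrite !mulr_sumr -!big_split /=; apply: eq_bigr => k _; rewrite /F; ring.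
have p4 : 0 <= siga * hr by rewrite mulr_ge0.
move: Fsum; rewrite FE sm sn wv0; lra.
Qed.
End Helpers.
Import Helpers.

Theorem theorem3p6 (R : realFieldType)
  (nx nt px pt : nat) (xs : 'I_nx.+1 -> R) (ts : 'I_nt.+1 -> R)
  (Hx Qx : 'M[R]_nx.+1) (Ht Qt : 'M[R]_nt.+1)
  (nv : nat) (v w : 'I_nv -> R)
  (eps sigs siga taurho taug : R)
  (rho rho0 : 'cV[R]_(nt.+1 * nx.+1)) (g g0 : 'I_nv -> 'cV[R]_(nt.+1 * nx.+1)) :
  (0 < nx)%N -> (0 < nt)%N ->
  SBP px xs Hx Qx -> SBP pt ts Ht Qt ->
  quadrature v w ->
  0 < eps -> 0 < sigs -> 0 <= siga ->
  let Ix : 'M[R]_nx.+1 := 1%:M in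
  let It : 'M[R]_nt.+1 := 1%:M in
  let Dt := (invmx Ht *m Qt) *t Ix in
  let Dx := It *t (invmx Hx *m Qx) in
  let Htf := Ht *t Ix in
  let Hxf := It *t Hx in
  let tL := It *t tfirst nx in
  let tR := It *t tlast nx in
  let tB := tfirst nt *t Ix in
  let SATrhoL := - taurho *: (invmx Hxf *m tL *m tL^T *m
                    avg w (fun k => vplus (v k) *: (rho + eps *: g k))) in
  let SATrhoR := taurho *: (invmx Hxf *m tR *m tR^T *m
                    avg w (fun k => vminus (v k) *: (rho + eps *: g k))) in
  let SATg := fun k =>
    if 0 < v k then - (taug * v k) *: (invmx Hxf *m tL *m tL^T *m (rho + eps *: g k))
    else if v k < 0 then (taug * v k) *: (invmx Hxf *m tR *m tR^T *m (rho + eps *: g k))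
    else 0 in
  (* initial data *)
  avg w g0 = 0 ->
  (* the scheme *)
  Dt *m rho + Dx *m avg w (fun k => v k *: g k) =
    - (siga *: rho) + SATrhoL + SATrhoR - invmx Htf *m tB *m tB^T *m (rho - rho0) ->
  (forall k, Dt *m g k + (v k / eps) *: (Dx *m g k)
               - eps^-1 *: avg w (fun j => v j *: (Dx *m g j))
               + (v k / eps ^+ 2) *: (Dx *m rho) =
             - ((sigs / eps ^+ 2 + siga) *: g k) + SATg k - avg w SATg
               - invmx Htf *m tB *m tB^T *m (g k - g0 k)) ->
  (* parameters *)
  taurho = 1 / (2 * eps) -> taug = 1 / (2 * eps ^+ 2) ->
  symmetric_quadrature v w ->
  let WT := (tlast nt *m (tlast nt)^T) *t Hx in
  let WB := (tfirst nt *m (tfirst nt)^T) *t Hx in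
  1 / 2 * qform WT rho + eps ^+ 2 / 2 * avgR w (fun k => qform WT (g k)) <=
  1 / 2 * qform WB rho0 + eps ^+ 2 / 2 * avgR w (fun k => qform WB (g0 k)).
Proof.
move=> nx0 nt0 [xinc Dxex dHx pHx QxE] [tinc Dtex dHt pHt QtE] [w0 w1 wv0] e0 s0 sa0
  Ix It Dt Dx Htf Hxf tL tR tB SATrhoL SATrhoR SATg avg0 Erho Eg tauR tauG sym.
cbv zeta.
set WT := (tlast nt *m (tlast nt)^T *t Hx).
set WB := (tfirst nt *m (tfirst nt)^T *t Hx).
have uHt : Ht \in unitmx by apply: diag_unit.
have uHx : Hx \in unitmx by apply: diag_unit.
have uHtf : Htf \in unitmx by apply: tensmx_unit => //; apply: unitmx1.
have uHxf : Hxf \in unitmx by apply: tensmx_unit => //; apply: unitmx1.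
pose H := Ht *t Hx.
pose At := Qt *t Hx.
pose Ax := Ht *t Qx.
pose BL := Ht *t (tfirst nx *m (tfirst nx)^T).
pose BR := Ht *t (tlast nx *m (tlast nx)^T).
have KDt : H *m Dt = At.
  by rewrite /H /Dt tensmx_mul mulmxA mulmxV // mul1mx /Ix mulmx1.
have KDx : H *m Dx = Ax.
  by rewrite /H /Dx tensmx_mul /It mulmx1 mulmxA mulmxV // mul1mx.
have KB : H *m (invmx Htf *m tB *m tB^T) = WB.
  have HE : H = (It *t Hx) *m Htf by rewrite /Htf tensmx_mul mul1mx mulmx1.
  rewrite HE !mulmxA -[(_ *m Htf) *m invmx Htf]mulmxA mulmxV // mulmx1.
  by rewrite /tB trmx_tens !tensmx_mul trmx1 mul1mx !mulmx1.
have KL : H *m (invmx Hxf *m tL *m tL^T) = BL.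
  have HE : H = (Ht *t Ix) *m Hxf by rewrite /Hxf tensmx_mul mul1mx mulmx1.
  rewrite HE !mulmxA -[(_ *m Hxf) *m invmx Hxf]mulmxA mulmxV // mulmx1.
  by rewrite /tL trmx_tens !tensmx_mul trmx1 mul1mx !mulmx1.
have KR : H *m (invmx Hxf *m tR *m tR^T) = BR.
  have HE : H = (Ht *t Ix) *m Hxf by rewrite /Hxf tensmx_mul mul1mx mulmx1.
  rewrite HE !mulmxA -[(_ *m Hxf) *m invmx Hxf]mulmxA mulmxV // mulmx1.
  by rewrite /tR trmx_tens !tensmx_mul trmx1 mul1mx !mulmx1.
have HxS : Hx^T = Hx by apply: diag_sym.
have HtS : Ht^T = Ht by apply: diag_sym.
have AtS : At + At^T = WT - WB.
  by rewrite /At trmx_tens HxS -tensDl QtE tensBl.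
have AxS : Ax + Ax^T = BR - BL.
  by rewrite /Ax trmx_tens HtS -tensDr QxE tensBr.
have dH : is_diag_mx H by apply: tens_diag.
have pH : forall i, 0 < H i i by apply: tens_diag_gt0.
have pH' : forall i, 0 <= H i i by move=> i; apply: ltW.
have dWB : is_diag_mx WB.
  by rewrite /WB /tfirst delta_outer; apply: tens_diag => //; apply: delta_diag.
have pWB : forall i, 0 <= WB i i.
  rewrite /WB /tfirst delta_outer; apply: tens_diag_ge0 => i; [exact: delta_ge0 | exact: ltW].
have dWT : is_diag_mx WT.
  by rewrite /WT /tlast delta_outer; apply: tens_diag => //; apply: delta_diag.
have pWT : forall i, 0 <= WT i i.
  rewrite /WT /tlast delta_outer; apply: tens_diag_ge0 => i; [exact: delta_ge0 | exact: ltW].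
have dBL : is_diag_mx BL.
  by rewrite /BL /tfirst delta_outer; apply: tens_diag => //; apply: delta_diag.
have pBL : forall i, 0 <= BL i i.
  rewrite /BL /tfirst delta_outer; apply: tens_diag_ge0 => i; [exact: ltW | exact: delta_ge0].
have dBR : is_diag_mx BR.
  by rewrite /BR /tlast delta_outer; apply: tens_diag => //; apply: delta_diag.
have pBR : forall i, 0 <= BR i i.
  rewrite /BR /tlast delta_outer; apply: tens_diag_ge0 => i; [exact: ltW | exact: delta_ge0].
have SWB : WB^T = WB by apply: diag_sym.
have SBL : BL^T = BL by apply: diag_sym.
have SBR : BR^T = BR by apply: diag_sym.
have SH : H^T = H by apply: diag_sym.
set V := avg w (fun k => v k *: g k).
set Y := avg w (fun j => v j *: (Dx *m g j)).
set SG := avg w SATg.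
set c := sigs / eps ^+ 2 + siga.
have c0 : 0 < c.
  have h : 0 < sigs / eps^+2 by rewrite divr_gt0 ?exprn_gt0.
  rewrite /c; lra.
have EgU : forall u k, bf At u (g k) + v k / eps * bf Ax u (g k) - eps^-1 * bf H u Y
    + v k / eps^+2 * bf Ax u rho
    = -(c * bf H u (g k)) + bf H u (SATg k) - bf H u SG - (bf WB u (g k) - bf WB u (g0 k)).
  move=> u k; have := congr1 (bf H u) (Eg k).
  rewrite !(bfDr, bfBr, bfNr, bfZr) !bf_mulr KDt KDx KB !(bfDr, bfBr, bfNr, bfZr).
  rewrite /c /SG /Y; move=> E; lra.
have G0 : avg w g = 0.
  apply: (bf_pd_eq0 dH pH).
  have := @G_lemma R nv w v eps c (bf H (avg w g) Y) (bf Ax (avg w g) rho)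
    (bf H (avg w g) SG) (bf At (avg w g) (avg w g)) (bf H (avg w g) (avg w g))
    (bf WB (avg w g) (avg w g))
    (fun k => bf At (avg w g) (g k)) (fun k => bf Ax (avg w g) (g k))
    (fun k => bf H (avg w g) (g k)) (fun k => bf H (avg w g) (SATg k))
    (fun k => bf WB (avg w g) (g k)) (fun k => bf WB (avg w g) (g0 k))
    (fun k => EgU (avg w g) k) w1 wv0.
  rewrite -!bf_avgr avg0 bf0r.
  have e1 : bf H (avg w g) Y = \sum_k w k * (v k * bf Ax (avg w g) (g k)).
    by rewrite /Y bf_avgr; apply: eq_bigr => k _; rewrite bfZr bf_mulr KDx.
  move=> /(_ erefl e1 erefl erefl erefl erefl).
  rewrite (bf_sym At) AtS bfBm => E.
  have p1 := bf_psd (avg w g) dWT pWT.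
  have p2 := bf_psd (avg w g) dWB pWB.
  have p3 := bf_psd (avg w g) dH pH'.
  have : c * bf H (avg w g) (avg w g) <= 0 by lra.
  rewrite pmulr_rle0 // => p4; lra.
have Er : bf WT rho rho / 2 - bf WB rho rho / 2 + bf Ax rho V =
   - (siga * bf H rho rho)
   - 1/(2*eps) * \sum_k w k * (vplus (v k) * (bf BL rho rho + eps * bf BL rho (g k)))
   + 1/(2*eps) * \sum_k w k * (vminus (v k) * (bf BR rho rho + eps * bf BR rho (g k)))
   - (bf WB rho rho - bf WB rho rho0).
  have := congr1 (bf H rho) Erho.
  rewrite /SATrhoL /SATrhoR !(bfDr, bfBr, bfNr, bfZr) !bf_mulr KDt KDx KB KL KR.
  rewrite !(bfDr, bfBr, bfNr, bfZr) !bf_avg_sat (bf_sym At) AtS bfBm tauR.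
  move=> E; lra.
apply: (@final_ineq R nv w v eps siga c
  (bf WT rho rho) (bf WB rho rho) (bf WB rho0 rho0) (bf WB rho rho0) (bf H rho rho)
  (bf BR rho rho) (bf BL rho rho) (bf Ax rho V)
  (fun k => bf WT (g k) (g k)) (fun k => bf WB (g k) (g k)) (fun k => bf WB (g0 k) (g0 k))
  (fun k => bf WB (g k) (g0 k)) (fun k => bf H (g k) (g k))
  (fun k => bf BR (g k) (g k)) (fun k => bf BL (g k) (g k))
  (fun k => bf BR rho (g k)) (fun k => bf BL rho (g k))
  (fun k => bf H (g k) Y) (fun k => bf H (g k) SG) (fun k => bf Ax (g k) rho)
  (fun k => bf H (g k) (SATg k)) e0 sa0 (ltW c0) w0 wv0) => //.
-
  move=> k /=; rewrite /SATg.
  case: (0 < v k); case: (v k < 0);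
    rewrite ?bf0r ?bfZr ?bf_mulr ?KL ?KR ?bfDr ?bfZr ?tauG
       ?(@bf_symm _ _ BL (g k) rho SBL) ?(@bf_symm _ _ BR (g k) rho SBR) //.
-
  move=> k /=; have := EgU (g k) k.
  rewrite (bf_sym At) AtS bfBm (bf_sym Ax) AxS bfBm => E; lra.
- by rewrite -bf_avgl G0 bf0l.
- by rewrite -bf_avgl G0 bf0l.
-
  have e1 : \sum_k w k * (v k * bf Ax (g k) rho) = bf Ax^T rho V.
    by rewrite bf_tr /V bf_avgl; apply: eq_bigr => k _; rewrite bfZl.
  rewrite e1 -bfDm AxS bfBm /V !bf_avgr.
  by congr (_ - _); apply: eq_bigr => k _; rewrite bfZr.
- have := bf_psd (rho - rho0) dWB pWB.
  rewrite !(bfBl, bfBr) (@bf_symm _ _ WB rho0 rho SWB); lra.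
- move=> k /=; have := bf_psd (g k - g0 k) dWB pWB.
  rewrite !(bfBl, bfBr) (@bf_symm _ _ WB (g0 k) (g k) SWB); lra.
- exact: bf_psd.
- by move=> k; apply: bf_psd.
- move=> k /=; have := bf_psd (rho + eps *: g k) dBR pBR.
  rewrite !(bfDl, bfDr, bfZl, bfZr) (@bf_symm _ _ BR (g k) rho SBR); lra.
- move=> k /=; have := bf_psd (rho + eps *: g k) dBL pBL.
  rewrite !(bfDl, bfDr, bfZl, bfZr) (@bf_symm _ _ BL (g k) rho SBL); lra.
Qed.
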